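(* Let $q$ be a prime power and $m\geq 2$. Let $\Phi(x)=\sum_{i=0}^{2m}c_ix^{q^i}\in\mathbb{F}_q[x]$ with $c_{2m}=1$, $c_i=-c_{2m-i}$ for $0\le i\le m$, and $c_m=0$. Let \[L(x)=\Phi(x)+t^qx^{q^{m+1}}-tx^{q^{m-1}}\in\mathbb{F}_q(t)[x],\] let $E$ be a splitting field of $L$ over $\mathbb{F}_q(t)$, $G$ its Galois group, and $V$ the space of roots of $L$ in $E$. Let $f\in\mathbb{F}_q[x]$ be the unique polynomial with $f(0)=0$ and $f^q-f=x^{q^m}\Phi(x)$. Then the function $Q:V\to E$ defined by \[Q(\alpha)=t\alpha^{q^m+q^{m-1}}+f(\alpha)\] takes values in $\mathbb{F}_q$ and is a nondegenerate $\mathbb{F}_q$-valued quadratic form on $V$ that is $G$-invariant.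
   Context: Such a polynomial $f$ exists and is unique (it is monic of degree $q^{m-1}(q^m+1)$). The roots of $L$ form a $2m$-dimensional $\mathbb{F}_q$-vector space $V$. A function $Q:V\to\mathbb{F}_q$ is a quadratic form if $Q(\lambda v)=\lambda^2Q(v)$ for $\lambda\in\mathbb{F}_q$ and $Q(u+w)=Q(u)+Q(w)+C(u,w)$ for a symmetric bilinear form $C$ (its polarization); $Q$ is nondegenerate if $C$ is nondegenerate. $G$-invariant means $Q(\sigma\alpha)=Q(\alpha)$ for all $\sigma\in G$, $\alpha\in V$. *)

(* Defs.v *)
From HB Require Import structures.
From mathcomp Require Import all_boot all_order all_algebra all_fingroup all_field.
From mathcomp Require Import fraction.
Set Implicit Arguments. Unset Strict Implicit. Unset Printing Implicit Defensive.
Import GRing.Theory.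
Local Open Scope ring_scope.

Notation ratfun F := {fraction {poly F}}.

Definition constF (F : fieldType) (a : F) : ratfun F := @FracField.tofrac _ (a%:P).

Definition tvar (F : fieldType) : ratfun F := @FracField.tofrac _ ('X : {poly F}).

Definition Phi (F : fieldType) (q m : nat) (c : nat -> F) : {poly F} :=
  \sum_(i < (2 * m).+1) c i *: 'X^(q ^ i).

Definition Lpoly (F : fieldType) (q m : nat) (c : nat -> F) : {poly ratfun F} :=
  map_poly (@constF F) (Phi q m c)
  + (tvar F ^+ q) *: 'X^(q ^ m.+1) - tvar F *: 'X^(q ^ m.-1).

Definition Qfun (F : fieldType) (E : fieldExtType (ratfun F)) (q m : nat)
    (f : {poly F}) (a : E) : E :=
  in_alg E (tvar F) * a ^+ (q ^ m + q ^ m.-1)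
  + (map_poly (fun b => in_alg E (constF b)) f).[a].

(* Main.v *)
Require Import Defs.
From HB Require Import structures.
From mathcomp Require Import all_boot all_order all_algebra all_fingroup all_field.
From mathcomp Require Import fraction.
From mathcomp Require Import all_solvable ring zify.
Set Implicit Arguments. Unset Strict Implicit. Unset Printing Implicit Defensive.
Import GRing.Theory.
Local Open Scope ring_scope.

Lemma card_pnat (F : finFieldType) p : p \in [pchar F] -> p.-nat #|F|.
Proof.
move=> pF; have := abelem_pgroup (fin_ring_pchar_abelem pF).
by rewrite /pgroup cardsT.
Qed.

Lemma frobD (F : finFieldType) (R : comNzRingType) (h : {rmorphism F -> R}) k (x y : R) :
  (x + y) ^+ (#|F| ^ k) = x ^+ (#|F| ^ k) + y ^+ (#|F| ^ k).
Proof.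
have [p pr pF] := finPcharP F.
have pR := rmorph_pchar h pF.
apply: exprDn_pchar; rewrite (eq_pnat _ (pcharf_eq pR)) pnatX.
by rewrite card_pnat.
Qed.

Lemma expf_cardk (F : finFieldType) k (x : F) : x ^+ (#|F| ^ k) = x.
Proof. by elim: k => [|k IH]; rewrite ?expr1 // expnSr exprM IH expf_card. Qed.

Section Main.
Variables (F : finFieldType) (m : nat) (c : nat -> F) (E : splittingFieldType (ratfun F)).
Local Notation q := #|F|.
Definition embR : {rmorphism F -> E} := (in_alg E) \o (@FracField.tofrac _) \o polyC.
Local Notation emb := embR.
Lemma embE a : emb a = in_alg E (constF a). Proof. by []. Qed.
Lemma galA (s : gal_of {:E}) x : s (in_alg E x) = in_alg E x.
Proof. by rewrite /= linearZ /= rmorph1. Qed.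

Definition T : E := in_alg E (tvar F).
Definition P k (a : E) := a ^+ (q ^ k).

Lemma q_gt1 : (1 < q)%N. Proof. exact: finNzRing_gt1. Qed.
Lemma PD k a b : P k (a + b) = P k a + P k b. Proof. exact: (frobD emb). Qed.
Lemma P0 k : P k 0 = 0. Proof. by rewrite /P expr0n expn_eq0 eqn0Ngt (ltnW q_gt1). Qed.
Lemma PM k a b : P k (a * b) = P k a * P k b. Proof. exact: exprMn. Qed.
Lemma Pemb k l : P k (emb l) = emb l. Proof. by rewrite /P -rmorphXn expf_cardk. Qed.
Lemma PZ k l a : P k (emb l * a) = emb l * P k a. Proof. by rewrite PM Pemb. Qed.
Lemma PP j k a : P j (P k a) = P (k + j) a. Proof. by rewrite /P -exprM -expnD. Qed.
Lemma PS k a : P k a ^+ q = P k.+1 a. Proof. by rewrite /P -exprM expnS mulnC. Qed.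

Definition Lval (a : E) : E :=
  \sum_(i < (2 * m).+1) emb (c i) * P i a + T ^+ q * P m.+1 a - T * P m.-1 a.

Lemma LE_horner a : (map_poly (in_alg E) (Lpoly q m c)).[a] = Lval a.
Proof.
rewrite /Lpoly /Phi !rmorphB !rmorphD /= !map_polyZ !map_polyXn -map_poly_comp.
rewrite (_ : map_poly _ _ = map_poly emb (\sum_(i < (2 * m).+1) c i *: 'X^(q ^ i))) //.
rewrite rmorph_sum !hornerE horner_sum /Lval /T /P rmorphXn; congr (_ + _ - _).
by apply: eq_bigr => i _; rewrite /= map_polyZ map_polyXn !hornerE.
Qed.

Lemma Lval_add a b : Lval (a + b) = Lval a + Lval b.
Proof.
rewrite /Lval; under eq_bigr do rewrite PD mulrDr.
rewrite big_split /= !PD; ring.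
Qed.

Lemma Lval_Z l a : Lval (emb l * a) = emb l * Lval a.
Proof.
rewrite /Lval; under eq_bigr do rewrite PZ mulrCA.
rewrite -mulr_sumr !PZ; ring.
Qed.

Lemma galP (s : gal_of {:E}) k a : s (P k a) = P k (s a).
Proof. by rewrite /P rmorphXn. Qed.
Lemma galemb (s : gal_of {:E}) l : s (emb l) = emb l.
Proof. exact: galA. Qed.
Lemma galT (s : gal_of {:E}) : s T = T.
Proof. exact: galA. Qed.

Lemma Lval_gal (s : gal_of {:E}) a : s (Lval a) = Lval (s a).
Proof.
rewrite /Lval rmorphB rmorphD rmorph_sum !rmorphM rmorphXn /= !galP galT.
by congr (_ + _ - _); apply: eq_bigr => i _; rewrite rmorphM /= galemb galP.
Qed.
End Main.

Lemma split_sym (V : zmodType) m (g : nat -> V) :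
  \sum_(0 <= i < (2 * m).+1) g i = \sum_(0 <= i < m) (g i + g (2 * m - i)%N) + g m.
Proof.
rewrite (@big_cat_nat _ _ _ m 0 (2 * m).+1) //=; last by lia.
rewrite (@big_ltn _ _ _ m); last by lia.
rewrite big_split /= -!addrA; congr (_ + _); rewrite addrC; congr (_ + _).
rewrite -(add0n m.+1) big_addn big_nat_rev /=.
have -> : ((2 * m).+1 - m.+1 = m)%N by lia.
by apply: eq_big_nat => i /andP[_ Hi]; congr g; lia.
Qed.

Lemma frob_sum (F : finFieldType) (R : comNzRingType) (h : {rmorphism F -> R}) k I (r : seq I) (G : I -> R) :
  (\sum_(i <- r) G i) ^+ (#|F| ^ k) = \sum_(i <- r) G i ^+ (#|F| ^ k).
Proof.
elim: r => [|x r IH]; first by rewrite !big_nil expr0n expn_eq0 eqn0Ngt (ltnW (finNzRing_gt1 F)).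
by rewrite !big_cons (frobD h) IH.
Qed.



Section Fexp.
Variables (F : finFieldType) (m : nat) (c : nat -> F).
Local Notation q := #|F|.
Hypotheses (m2 : (2 <= m)%N) (c2m : c (2 * m)%N = 1)
  (csym : forall i, (i <= m)%N -> c i = - c (2 * m - i)%N) (cm : c m = 0).

Definition Y i k : {poly F} := 'X^(q ^ (i + k)) * 'X^(q ^ (m + k)).
Definition fexp : {poly F} :=
  \sum_(0 <= i < m) (- c i) *: \sum_(0 <= k < m - i) Y i k.

Lemma YS i k : Y i k ^+ q = Y i k.+1.
Proof. by rewrite /Y exprMn -!exprM -!expnSr !addnS. Qed.

Lemma fexp_eq : fexp ^+ q - fexp = 'X^(q ^ m) * Phi q m c.
Proof.
have fs := frob_sum (@polyC F) 1.
rewrite /fexp fs -sumrB /Phi -(big_mkord xpredT (fun i => c i *: 'X^(q ^ i))).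
rewrite split_sym cm scale0r addr0 mulr_sumr.
apply: eq_big_nat => i /andP[_ Hi].
rewrite exprZn -[(- c i) ^+ q]/((- c i) ^+ (q ^ 1)) expf_cardk expn1 fs.
rewrite -scalerBr.
under eq_bigr do rewrite YS.
rewrite -sumrB telescope_sumr //.
have -> : c (2 * m - i)%N = - c i by rewrite (@csym i) ?opprK //; lia.
have e1 : (i + (m - i))%N = m by lia.
have e2 : (m + (m - i))%N = (2 * m - i)%N by lia.
rewrite /Y !addn0 e1 e2.
rewrite -!mul_polyC polyCN.
move: ('X^(q ^ m)) ('X^(q ^ i)) ('X^(q ^ (2 * m - i))) (c i)%:P => a b d e; ring.
Qed.

Lemma fexp0 : fexp.[0] = 0.
Proof.
rewrite /fexp horner_sum big1 // => i _; rewrite hornerZ horner_sum big1 ?mulr0 // => k _.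
by rewrite /Y hornerM hornerXn expr0n expn_eq0 eqn0Ngt (ltnW (finNzRing_gt1 F)) mul0r.
Qed.

Lemma f_unique (f : {poly F}) : f.[0] = 0 -> f ^+ q - f = 'X^(q ^ m) * Phi q m c -> f = fexp.
Proof.
move=> f0 hf; set d := f - fexp.
have hd : d ^+ q = d.
  have := frobD (@polyC F) 1 d fexp; rewrite expn1 /d subrK => e.
  move: hf; rewrite e -fexp_eq => /eqP; rewrite -subr_eq0 => /eqP h.
  apply/eqP; rewrite -subr_eq0; apply/eqP; rewrite -h; ring.
have sd : (size d <= 1)%N.
  have := size_exp d q; rewrite hd => h.
  have q1 := finNzRing_gt1 F.
  case: (size d) h => [|[|n]] //= h; exfalso.
  move: h q1; move: #|F| => k h q1; nia.
have := size1_polyC sd; rewrite -horner_coef0 /d hornerD hornerN f0 fexp0 subrr => /eqP.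
by rewrite subr_eq0 => /eqP.
Qed.
End Fexp.

Section Qsec.
Variables (F : finFieldType) (m : nat) (c : nat -> F) (E : splittingFieldType (ratfun F)).
Local Notation q := #|F|.
Local Notation emb := (embR E).
Local Notation P := (@P F E).
Local Notation T := (@T F E).
Hypotheses (m2 : (2 <= m)%N) (c2m : c (2 * m)%N = 1)
  (csym : forall i, (i <= m)%N -> c i = - c (2 * m - i)%N) (cm : c m = 0).

Definition fE (a : E) : E :=
  \sum_(0 <= i < m) (- emb (c i)) * \sum_(0 <= k < m - i) (P (i + k) a * P (m + k) a).

Lemma fexp_horner a : (map_poly emb (fexp m c)).[a] = fE a.
Proof.
rewrite /fexp rmorph_sum horner_sum; apply: eq_bigr => i _.
rewrite /= map_polyZ hornerZ rmorphN rmorph_sum horner_sum; congr (_ * _).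
by apply: eq_bigr => k _; rewrite /Y rmorphM /= !map_polyXn hornerM !hornerXn.
Qed.

Definition Qv (a : E) : E := T * (P m a * P m.-1 a) + fE a.

Lemma Qfun_eq a : Qfun q m (fexp m c) a = Qv a.
Proof.
rewrite /Qfun /Qv exprD -fexp_horner; congr (_ * _ + _).
Qed.

Definition Bq (u w : E) : E :=
  T * (P m u * P m.-1 w + P m w * P m.-1 u) +
  \sum_(0 <= i < m) (- emb (c i)) *
     \sum_(0 <= k < m - i) (P (i + k) u * P (m + k) w + P (i + k) w * P (m + k) u).

Lemma QvD u w : Qv (u + w) = Qv u + Qv w + Bq u w.
Proof.
rewrite /Qv /fE /Bq.
have -> : \sum_(0 <= i < m) (- emb (c i)) *
     \sum_(0 <= k < m - i) (P (i + k) (u + w) * P (m + k) (u + w)) =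
  \sum_(0 <= i < m) (- emb (c i)) * \sum_(0 <= k < m - i) (P (i + k) u * P (m + k) u)
  + \sum_(0 <= i < m) (- emb (c i)) * \sum_(0 <= k < m - i) (P (i + k) w * P (m + k) w)
  + \sum_(0 <= i < m) (- emb (c i)) *
     \sum_(0 <= k < m - i) (P (i + k) u * P (m + k) w + P (i + k) w * P (m + k) u).
  rewrite -!big_split; apply: eq_bigr => i _ /=; rewrite -!mulrDr -!big_split /=.
  by congr (_ * _); apply: eq_bigr => k _; rewrite !PD; ring.
rewrite !PD; ring.
Qed.

Lemma QvZ l a : Qv (emb l * a) = emb l ^+ 2 * Qv a.
Proof.
rewrite /Qv /fE.
have -> : \sum_(0 <= i < m) (- emb (c i)) *
     \sum_(0 <= k < m - i) (P (i + k) (emb l * a) * P (m + k) (emb l * a)) =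
  emb l ^+ 2 * \sum_(0 <= i < m) (- emb (c i)) * \sum_(0 <= k < m - i) (P (i + k) a * P (m + k) a).
  rewrite mulr_sumr; apply: eq_bigr => i _; rewrite mulrCA; congr (_ * _).
  by rewrite mulr_sumr; apply: eq_bigr => k _; rewrite !PZ; ring.
rewrite !PZ; ring.
Qed.

Lemma BqZ l u u' w : Bq (emb l * u + u') w = emb l * Bq u w + Bq u' w.
Proof.
rewrite /Bq.
have -> : \sum_(0 <= i < m) (- emb (c i)) *
     \sum_(0 <= k < m - i) (P (i + k) (emb l * u + u') * P (m + k) w
                           + P (i + k) w * P (m + k) (emb l * u + u')) =
  emb l * \sum_(0 <= i < m) (- emb (c i)) *
     \sum_(0 <= k < m - i) (P (i + k) u * P (m + k) w + P (i + k) w * P (m + k) u)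
  + \sum_(0 <= i < m) (- emb (c i)) *
     \sum_(0 <= k < m - i) (P (i + k) u' * P (m + k) w + P (i + k) w * P (m + k) u').
  rewrite mulr_sumr -big_split; apply: eq_bigr => i _ /=; rewrite mulrCA -mulrDr.
  congr (_ * _); rewrite mulr_sumr -big_split /=; apply: eq_bigr => k _; rewrite !PD !PZ /=; ring.
rewrite !PD !PZ; ring.
Qed.

Lemma BqC u w : Bq u w = Bq w u.
Proof.
rewrite /Bq; congr (_ * _ + _); first by rewrite addrC.
by apply: eq_bigr => i _; congr (_ * _); apply: eq_bigr => k _; rewrite addrC.
Qed.

Lemma Qv_gal (s : gal_of {:E}) a : s (Qv a) = Qv (s a).
Proof.
rewrite /Qv /fE rmorphD !rmorphM /= galT !galP rmorph_sum; congr (_ + _).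
apply: eq_bigr => i _; rewrite rmorphM rmorphN /= galemb rmorph_sum; congr (_ * _).
by apply: eq_bigr => k _; rewrite rmorphM /= !galP.
Qed.
End Qsec.

Lemma size_sum_le (R : nzRingType) (I : eqType) (r : seq I) (G : I -> {poly R}) n :
  (forall i, i \in r -> (size (G i) <= n)%N) -> (size (\sum_(i <- r) G i)%R <= n)%N.
Proof.
elim: r => [|x r IH] h; first by rewrite big_nil size_poly0.
rewrite big_cons (leq_trans (size_polyD _ _)) // geq_max h ?mem_head // IH //.
by move=> i hi; apply: h; rewrite inE hi orbT.
Qed.

Lemma size_add_le (R : nzRingType) (p p' : {poly R}) n :
  (size p <= n)%N -> (size p' <= n)%N -> (size (p + p')%R <= n)%N.
Proof. by move=> h1 h2; rewrite (leq_trans (size_polyD _ _)) // geq_max h1 h2. Qed.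

Lemma size_XZ_le (R : nzRingType) (a : R) e n : (e < n)%N -> (size (a *: 'X^e)%R <= n)%N.
Proof. by move=> h; rewrite (leq_trans (size_scale_leq _ _)) // size_polyXn. Qed.

Lemma size_Z_le (R : nzRingType) (a : R) (p : {poly R}) n : (size p <= n)%N -> (size (a *: p)%R <= n)%N.
Proof. by move=> h; rewrite (leq_trans (size_scale_leq _ _)). Qed.

Section Q2.
Variables (F : finFieldType) (m : nat) (c : nat -> F) (E : splittingFieldType (ratfun F)).
Local Notation q := #|F|.
Local Notation emb := (embR E).
Local Notation P := (@P F E).
Local Notation T := (@T F E).
Hypotheses (m2 : (2 <= m)%N) (c2m : c (2 * m)%N = 1)
  (csym : forall i, (i <= m)%N -> c i = - c (2 * m - i)%N) (cm : c m = 0).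

Lemma hornerXP k (w : E) : ('X^(q ^ k)).[w] = P k w.
Proof. exact: hornerXn. Qed.

Lemma fixed_emb (x : E) : x ^+ q = x -> exists b, x = emb b.
Proof.
move=> hx; have := finField_genPoly F => /(congr1 (map_poly emb)).
rewrite rmorphB /= map_polyXn map_polyX rmorph_prod /= => e.
have : root ('X^q - 'X) x by rewrite rootE !hornerE hx subrr.
rewrite e; under eq_bigr do rewrite rmorphB /= map_polyX map_polyC.
rewrite -(big_map emb xpredT (fun z => 'X - z%:P)) root_prod_XsubC.
by case/mapP => y _ ->; exists y.
Qed.

Lemma Qv_pow (a : E) : Lval m c a = 0 -> Qv m c a ^+ q = Qv m c a.
Proof.
move=> H.
have fq (x y : E) : (x + y) ^+ q = x ^+ q + y ^+ q by have := frobD emb 1 x y; rewrite expn1.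
have fp : fE m c a ^+ q = fE m c a + P m a * \sum_(i < (2 * m).+1) emb (c i) * P i a.
  rewrite -fexp_horner -horner_exp -rmorphXn.
  have -> : fexp m c ^+ q = fexp m c + 'X^(q ^ m) * Phi q m c.
    by rewrite -fexp_eq // addrC subrK.
  rewrite rmorphD rmorphM /= map_polyXn hornerD hornerM hornerXP; congr (_ + _ * _).
  rewrite /Phi rmorph_sum horner_sum; apply: eq_bigr => i _.
  by rewrite /= map_polyZ map_polyXn hornerZ hornerXP.
have m1 : m.-1.+1 = m by lia.
rewrite /Qv fq fp exprMn exprMn !PS m1.
apply/eqP; rewrite -subr_eq0; apply/eqP.
transitivity (P m a * Lval m c a); last by rewrite H mulr0.
rewrite /Lval; ring.
Qed.

Definition Bp (u : E) : {poly E} :=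
  T *: (P m u *: 'X^(q ^ m.-1) + P m.-1 u *: 'X^(q ^ m)) +
  \sum_(0 <= i < m) (- emb (c i)) *:
     \sum_(0 <= k < m - i) (P (i + k) u *: 'X^(q ^ (m + k)) + P (m + k) u *: 'X^(q ^ (i + k))).

Lemma Bp_horner (u w : E) : (Bp u).[w] = Bq m c u w.
Proof.
rewrite /Bp /Bq hornerD hornerZ hornerD !hornerZ !hornerXP horner_sum.
congr (_ * _ + _); first by ring.
apply: eq_bigr => i _; rewrite hornerZ horner_sum; congr (_ * _).
by apply: eq_bigr => k _; rewrite hornerD !hornerZ !hornerXP; ring.
Qed.

Lemma size_Bp (u : E) : (size (Bp u) <= (q ^ (2 * m).-1).+1)%N.
Proof.
have q1 := finNzRing_gt1 F.
have hX e : (e <= (2 * m).-1)%N -> (q ^ e < (q ^ (2 * m).-1).+1)%N.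
  by move=> h; rewrite ltnS leq_exp2l.
apply: size_add_le.
  apply: size_Z_le; apply: size_add_le; apply: size_XZ_le; apply: hX; lia.
apply: size_sum_le => i; rewrite mem_index_iota => /andP[_ hi].
apply: size_Z_le; apply: size_sum_le => k; rewrite mem_index_iota => /andP[_ hk].
apply: size_add_le; apply: size_XZ_le; apply: hX; lia.
Qed.

Lemma eqXP a b : ((q ^ a == q ^ b)%N = (a == b)).
Proof. by rewrite eqn_exp2l // finNzRing_gt1. Qed.

Lemma coef_Bp (u : E) : (Bp u)`_(q ^ (2 * m).-1) = P m.-1 u.
Proof.
rewrite /Bp coefD coefZ coefD !coefZ !coefXn !eqXP.
rewrite (_ : (_ == _)%N = false); last by apply/negbTE; lia.
rewrite (_ : (_ == _)%N = false); last by apply/negbTE; lia.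
rewrite !mulr0 addr0 mulr0 add0r coef_sum.
rewrite (@big_ltn _ _ _ 0 m); last by lia.
rewrite [X in _ + X = _]big1_seq ?addr0; last first.
  move=> i; rewrite mem_index_iota => /andP[hi1 hi2].
  rewrite coefZ coef_sum big1_seq ?mulr0 // => k; rewrite mem_index_iota => /andP[_ hk].
  rewrite coefD !coefZ !coefXn !eqXP.
  rewrite (_ : (_ == _)%N = false); last by apply/negbTE; lia.
  rewrite (_ : (_ == _)%N = false); last by apply/negbTE; lia.
  by rewrite !mulr0 addr0.
rewrite coefZ coef_sum subn0.
have -> : m = m.-1.+1 by lia.
rewrite big_nat_recr //= big1_seq ?add0r; last first.
  move=> k; rewrite mem_index_iota => /andP[_ hk].
  rewrite coefD !coefZ !coefXn !eqXP.
  rewrite (_ : (_ == _)%N = false); last by apply/negbTE; lia.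
  rewrite (_ : (_ == _)%N = false); last by apply/negbTE; lia.
  by rewrite !mulr0 addr0.
rewrite coefD !coefZ !coefXn !eqXP.
have hc0 : c 0 = -1 by rewrite (@csym 0) // subn0 c2m.
rewrite (_ : (_ == _)%N = true); last by apply/eqP; lia.
rewrite (_ : (_ == _)%N = false); last by apply/negbTE; lia.
rewrite mulr1 mulr0 addr0 add0n.
change ((tofrac (c 0)%:P)%:A) with (emb (c 0)).
by rewrite hc0 rmorphN1 opprK mul1r.
Qed.

Lemma nondeg (u : E) (rs : seq E) : uniq rs -> size rs = (q ^ (2 * m))%N ->
  (forall z, z \in rs -> Bq m c u z = 0) -> u = 0.
Proof.
move=> urs srs hz; apply/eqP; apply: contraT => nu.
have nzc : (Bp u)`_(q ^ (2 * m).-1) != 0 by rewrite coef_Bp /P expf_eq0 (negbTE nu) andbF.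
have nz : Bp u != 0 by apply: contraNneq nzc => ->; rewrite coef0.
have ar : all (root (Bp u)) rs by apply/allP => z hz'; rewrite rootE Bp_horner hz.
have := max_poly_roots nz ar urs; rewrite srs => h.
have := leq_trans h (size_Bp u); rewrite ltnS leqNgt ltn_exp2l ?finNzRing_gt1 //.
have hlt : ((2 * m).-1 < 2 * m)%N by lia.
by rewrite hlt.
Qed.

Definition LEp : {poly E} :=
  \sum_(i < (2 * m).+1) emb (c i) *: 'X^(q ^ i) + T ^+ q *: 'X^(q ^ m.+1) - T *: 'X^(q ^ m.-1).

Lemma LE_eq : map_poly (in_alg E) (Lpoly q m c) = LEp.
Proof.
rewrite /Lpoly /Phi !rmorphB !rmorphD /= !map_polyZ !map_polyXn -map_poly_comp.
rewrite (_ : map_poly _ _ = map_poly emb (\sum_(i < (2 * m).+1) c i *: 'X^(q ^ i))) //.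
rewrite rmorph_sum /LEp /T rmorphXn; congr (_ + _ - _).
by apply: eq_bigr => i _; rewrite /= map_polyZ map_polyXn.
Qed.

Lemma natq0 i : (0 < i)%N -> ((q ^ i)%:R : F) = 0.
Proof.
move=> hi; have [p pr pF] := finPcharP F.
have [k hk] := p_natP (card_pnat pF).
have q1 := finNzRing_gt1 F.
have k0 : (0 < k)%N by move: q1; rewrite hk; case: k hk => //; rewrite expn0.
apply/eqP; rewrite -(dvdn_pcharf pF) hk -expnM dvdn_exp //; lia.
Qed.

Lemma mulrn_q0 (R : nzRingType) (h : {rmorphism F -> R}) i (x : R) :
  (0 < i)%N -> x *+ (q ^ i) = 0.
Proof. by move=> hi; rewrite -mulr_natr -(rmorph_nat h) natq0 // rmorph0 mulr0. Qed.

Lemma hc0 : c 0 = -1.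
Proof. by rewrite (@csym 0) // subn0 c2m. Qed.

Lemma LEp_deriv : LEp^`() = (emb (c 0))%:P.
Proof.
have hP := @mulrn_q0 _ (polyC \o emb).
rewrite /LEp derivB derivD raddf_sum !derivZ !derivXn !hP ?scaler0 ?subr0 ?addr0; try lia.
rewrite big_ord_recl /= big1 ?addr0; last by move=> i _; rewrite derivZ derivXn hP ?scaler0.
by rewrite derivZ expn0 derivX alg_polyC.
Qed.

Lemma LEp_sep : separable_poly LEp.
Proof.
rewrite unlock /separable_poly LEp_deriv -alg_polyC coprimepZr ?coprimep1 //.
by rewrite hc0 rmorphN1 oppr_eq0 oner_eq0.
Qed.

Lemma size_LEp : size LEp = (q ^ (2 * m)).+1.
Proof.
have q1 := finNzRing_gt1 F.
rewrite /LEp big_ord_recr /= c2m rmorph1 scale1r.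
set S := \sum_(i < 2 * m) _.
rewrite scale1r.
have -> : S + 'X^(q ^ (2 * m)) + T ^+ q *: 'X^(q ^ m.+1) - T *: 'X^(q ^ m.-1) =
  'X^(q ^ (2 * m)) + (S + T ^+ q *: 'X^(q ^ m.+1) - T *: 'X^(q ^ m.-1)).
  by move: S ('X^_) (T ^+ q *: _) (T *: _) => a b c' d; ring.
rewrite size_polyDl size_polyXn //.
have hX e : (e < 2 * m)%N -> (q ^ e < q ^ (2 * m))%N by move=> h; rewrite ltn_exp2l.
rewrite ltnS; apply: size_add_le; last by rewrite size_polyN; apply: size_XZ_le; apply: hX; lia.
apply: size_add_le; last by apply: size_XZ_le; apply: hX; lia.
apply: size_sum_le => i _; apply: size_XZ_le; apply: hX => /=; exact: ltn_ord.
Qed.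

Lemma roots_LE : splittingFieldFor 1%AS (map_poly (in_alg E) (Lpoly q m c)) fullv ->
  exists rs : seq E, [/\ uniq rs, size rs = (q ^ (2 * m))%N &
     forall z, z \in rs -> Lval m c z = 0].
Proof.
rewrite LE_eq => -[rs hrs _]; exists rs; split.
- by rewrite -separable_prod_XsubC -(eqp_separable hrs) LEp_sep.
- by have := eqp_size hrs; rewrite size_LEp size_prod_XsubC => -[->].
move=> z hz; have := eqp_root hrs z; rewrite root_prod_XsubC hz => /rootP.
by rewrite -LE_eq LE_horner.
Qed.
End Q2.

Unset Implicit Arguments.

Theorem theorem4p8 (F : finFieldType) (m : nat) (c : nat -> F)
  (E : splittingFieldType (ratfun F)) (f : {poly F}) :
  let q := #|F| in
  let embF := fun a : F => in_alg E (constF a) in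
  let LE := map_poly (in_alg E) (Lpoly q m c) in
  let V := fun a : E => root LE a in
  let Q := Qfun q m f in
  (2 <= m)%N ->
  c (2 * m)%N = 1 ->
  (forall i, (i <= m)%N -> c i = - c (2 * m - i)%N) ->
  c m = 0 ->
  splittingFieldFor 1%AS LE fullv ->
  f.[0] = 0 ->
  f ^+ q - f = 'X^(q ^ m) * Phi q m c ->
  exists Q0 : E -> F,
    (* Q takes values in F_q *)
    (forall a, V a -> Q a = embF (Q0 a)) /\
    (* Q0 is a quadratic form on V *)
    (forall (l : F) a, V a -> Q0 (embF l * a) = l ^+ 2 * Q0 a) /\
    (exists C : E -> E -> F,
       (forall u w, V u -> V w -> Q0 (u + w) = Q0 u + Q0 w + C u w) /\
       (forall u w, V u -> V w -> C u w = C w u) /\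
       (forall (l : F) u u' w, V u -> V u' -> V w ->
          C (embF l * u + u') w = l * C u w + C u' w) /\
       (* nondegenerate *)
       (forall u, V u -> (forall w, V w -> C u w = 0) -> u = 0)) /\
    (* G-invariant, G = Gal(E / F_q(t)) *)
    (forall (s : gal_of {:E}) a, s \in 'Gal({:E} / 1%AS)%g -> V a ->
       Q0 (s a) = Q0 a).
Proof.
cbv zeta beta => m2 c2m csym cm hsplit f0 hf.
have ef : f = fexp m c by apply: (f_unique m2 csym cm f0 hf).
subst f.
have hV (a : E) : root (map_poly (in_alg E) (Lpoly #|F| m c)) a = (Lval m c a == 0).
  by rewrite rootE LE_horner.
have hW (a : E) : root (map_poly (in_alg E) (Lpoly #|F| m c)) a -> Lval m c a = 0.
  by rewrite hV => /eqP.
pose Q0 := fun a : E => match [pick b | Qv m c a == embR E b] with Some b => b | None => 0 end.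
have Q0P (a : E) : Lval m c a = 0 -> Qv m c a = embR E (Q0 a).
  move=> ha; rewrite /Q0; case: pickP => [b /eqP //| H].
  have [b hb] : exists b, Qv m c a = embR E b.
    by apply: fixed_emb; exact: (Qv_pow m2 csym cm ha).
  by move: (H b); rewrite hb eqxx.
have embI := fmorph_inj (embR E).
have CB (u w : E) : Lval m c u = 0 -> Lval m c w = 0 ->
    embR E (Q0 (u + w) - Q0 u - Q0 w) = Bq m c u w.
  move=> hu hw; have huw : Lval m c (u + w) = 0 by rewrite Lval_add hu hw addr0.
  rewrite !rmorphB -!Q0P // QvD; ring.
exists Q0; split; [|split; [|split]].
- by move=> a /hW ha; rewrite Qfun_eq; apply: Q0P.
- move=> l a /hW ha.
  have hla : Lval m c (embR E l * a) = 0 by rewrite Lval_Z ha mulr0.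
  by apply: embI; rewrite -Q0P // rmorphM rmorphXn -Q0P // QvZ.
- exists (fun u w : E => Q0 (u + w) - Q0 u - Q0 w); split; [|split; [|split]].
  + by move=> u w _ _; ring.
  + by move=> u w _ _; rewrite [u + w]addrC; ring.
  + move=> l u u' w /hW hu /hW hu' /hW hw.
    have hl : Lval m c (embR E l * u + u') = 0 by rewrite Lval_add Lval_Z hu hu' mulr0 addr0.
    apply: embI; rewrite (CB _ _ hl hw) rmorphD rmorphM (CB _ _ hu hw) (CB _ _ hu' hw).
    exact: BqZ.
  + move=> u /hW hu H.
    have [rs [urs srs hrs]] := roots_LE m2 c2m csym hsplit.
    apply: (nondeg m2 c2m csym urs srs) => z hz.
    have hz' := hrs z hz.
    by rewrite -(CB _ _ hu hz') H ?rmorph0 // hV hz'.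
- move=> s a _ /hW ha.
  have hsa : Lval m c (s a) = 0 by rewrite -Lval_gal ha rmorph0.
  by apply: embI; rewrite -!Q0P // -Qv_gal Q0P // galemb.
Qed.
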